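(* Let $(L,F,R)$ be an adjoint triple of covariant functors $F:\mathcal{A}\to \mathcal{B}$ and $L,R:\mathcal{B}\to \mathcal{A}$ between abelian categories (that is, $L$ is left adjoint to $F$ and $R$ is right adjoint to $F$). (1) Let $M,N$ be objects of $\mathcal{A}$ and assume $F$ is fully faithful. Then $N$ is strongly $M$-Rickart in $\mathcal{A}$ if and only if $F(N)$ is strongly $F(M)$-Rickart in $\mathcal{B}$; and $N$ is dual strongly $M$-Rickart in $\mathcal{A}$ if and only if $F(N)$ is dual strongly $F(M)$-Rickart in $\mathcal{B}$. (2) Let $M,N$ be objects of $\mathcal{B}$ and assume $L$ (or $R$) is fully faithful. Then (i) $N$ is strongly $M$-Rickart in $\mathcal{B}$ if and only if $R(N)$ is strongly $R(M)$-Rickart in $\mathcal{A}$; (ii) $N$ is dual strongly $M$-Rickart in $\mathcal{B}$ if and only if $L(N)$ is dual strongly $L(M)$-Rickart in $\mathcal{A}$.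
   Context: A morphism $f:X\to Y$ is a section if $f'f=1_X$ for some $f'$, a retraction if $ff'=1_Y$ for some $f'$. A monomorphism $k:K\to X$ is fully invariant if for every $h:X\to X$ there is $\alpha:K\to K$ with $hk=k\alpha$; an epimorphism $c:X\to C$ is fully coinvariant if for every $h:X\to X$ there is $\gamma:C\to C$ with $ch=\gamma c$. For objects $M,N$: $N$ is strongly $M$-Rickart if the kernel of every morphism $f:M\to N$ is a fully invariant section; $N$ is dual strongly $M$-Rickart if the cokernel of every morphism $f:M\to N$ is a fully coinvariant retraction. *)

(* Defs.v *)
From HB Require Import structures.
From mathcomp Require Import all_boot all_algebra.
Set Implicit Arguments. Unset Strict Implicit. Unset Printing Implicit Defensive.
Import GRing.Theory.
Local Open Scope ring_scope.

Record precat := PreCat {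
  Ob : Type;
  Hom : Ob -> Ob -> zmodType;
  comp : forall X Y Z : Ob, Hom Y Z -> Hom X Y -> Hom X Z;
  idm : forall X : Ob, Hom X X;
  comp_assoc : forall X Y Z W (h : Hom Z W) (g : Hom Y Z) (f : Hom X Y),
      comp h (comp g f) = comp (comp h g) f;
  comp_idl : forall X Y (f : Hom X Y), comp (idm Y) f = f;
  comp_idr : forall X Y (f : Hom X Y), comp f (idm X) = f;
  comp_addl : forall X Y Z (g g' : Hom Y Z) (f : Hom X Y),
      comp (g + g') f = comp g f + comp g' f;
  comp_addr : forall X Y Z (g : Hom Y Z) (f f' : Hom X Y),
      comp g (f + f') = comp g f + comp g f'
}.

Arguments Hom {C} X Y : rename.
Arguments comp {C X Y Z} g f : rename.
Arguments idm {C} X : rename.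

Section CatDefs.
Variable C : precat.

Definition monic {X Y : Ob C} (f : Hom X Y) : Prop :=
  forall Z (g h : Hom Z X), comp f g = comp f h -> g = h.
Definition epic {X Y : Ob C} (f : Hom X Y) : Prop :=
  forall Z (g h : Hom Y Z), comp g f = comp h f -> g = h.

Definition is_kernel {X Y K : Ob C} (f : Hom X Y) (k : Hom K X) : Prop :=
  comp f k = 0 /\
  forall Z (g : Hom Z X), comp f g = 0 -> exists! u : Hom Z K, comp k u = g.

Definition is_cokernel {X Y Q : Ob C} (f : Hom X Y) (c : Hom Y Q) : Prop :=
  comp c f = 0 /\
  forall Z (g : Hom Y Z), comp g f = 0 -> exists! u : Hom Q Z, comp u c = g.

Definition is_abelian : Prop :=
  (exists Z : Ob C, forall X, (forall f g : Hom Z X, f = g) /\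
                              (forall f g : Hom X Z, f = g)) /\
  (forall X Y : Ob C, exists P (i1 : Hom X P) (i2 : Hom Y P)
                             (p1 : Hom P X) (p2 : Hom P Y),
      [/\ comp p1 i1 = idm X, comp p2 i2 = idm Y, comp p1 i2 = 0,
          comp p2 i1 = 0 & comp i1 p1 + comp i2 p2 = idm P]) /\
  (forall X Y (f : Hom X Y), exists K (k : Hom K X), is_kernel f k) /\
  (forall X Y (f : Hom X Y), exists Q (c : Hom Y Q), is_cokernel f c) /\
  (forall X Y (f : Hom X Y), monic f -> exists Z (g : Hom Y Z), is_kernel g f) /\
  (forall X Y (f : Hom X Y), epic f -> exists Z (g : Hom Z X), is_cokernel g f).

Definition is_section {X Y : Ob C} (f : Hom X Y) : Prop :=
  exists f' : Hom Y X, comp f' f = idm X.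
Definition is_retraction {X Y : Ob C} (f : Hom X Y) : Prop :=
  exists f' : Hom Y X, comp f f' = idm Y.

Definition fully_invariant {K X : Ob C} (k : Hom K X) : Prop :=
  forall h : Hom X X, exists alpha : Hom K K, comp h k = comp k alpha.
Definition fully_coinvariant {X Q : Ob C} (c : Hom X Q) : Prop :=
  forall h : Hom X X, exists gamma : Hom Q Q, comp c h = comp gamma c.

Definition strongly_rickart (M N : Ob C) : Prop :=
  forall (f : Hom M N) (K : Ob C) (k : Hom K M),
    is_kernel f k -> is_section k /\ fully_invariant k.

Definition dual_strongly_rickart (M N : Ob C) : Prop :=
  forall (f : Hom M N) (Q : Ob C) (c : Hom N Q),
    is_cokernel f c -> is_retraction c /\ fully_coinvariant c.

End CatDefs.

Record functor (C D : precat) := Functor {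
  fob : Ob C -> Ob D;
  fmap : forall X Y : Ob C, Hom X Y -> Hom (fob X) (fob Y);
  fmap_id : forall X, fmap (idm X) = idm (fob X);
  fmap_comp : forall X Y Z (g : Hom Y Z) (f : Hom X Y),
      fmap (comp g f) = comp (fmap g) (fmap f)
}.
Arguments fob {C D} F X : rename.
Arguments fmap {C D} F {X Y} f : rename.

Definition fully_faithful {C D : precat} (F : functor C D) : Prop :=
  forall X Y : Ob C, bijective (@fmap C D F X Y).

Definition adjoint {C D : precat} (G : functor C D) (H : functor D C) : Prop :=
  exists (eta : forall c : Ob C, Hom c (fob H (fob G c)))
         (eps : forall d : Ob D, Hom (fob G (fob H d)) d),
    [/\ forall c c' (f : Hom c c'),
          comp (fmap H (fmap G f)) (eta c) = comp (eta c') f,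
        forall d d' (g : Hom d d'),
          comp g (eps d) = comp (eps d') (fmap G (fmap H g)),
        forall c, comp (eps (fob G c)) (fmap G (eta c)) = idm (fob G c)
      & forall d, comp (fmap H (eps d)) (eta (fob H d)) = idm (fob H d)].

(* Main.v *)
Require Import Defs.
From mathcomp Require Import all_boot all_algebra.
Import Defs.
Set Implicit Arguments. Unset Strict Implicit. Unset Printing Implicit Defensive.
Import GRing.Theory.
Local Open Scope ring_scope.

Lemma comp0r (C : precat) (X Y Z : Ob C) (g : Hom Y Z) : comp g (0 : Hom X Y) = 0.
Proof.
have h := comp_addr g (0 : Hom X Y) 0.
rewrite addr0 in h.
by apply: (@addrI _ (comp g 0)); rewrite addr0 -h.
Qed.

Lemma comp0l (C : precat) (X Y Z : Ob C) (f : Hom X Y) : comp (0 : Hom Y Z) f = 0.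
Proof.
have h := comp_addl (0 : Hom Y Z) 0 f.
rewrite addr0 in h.
by apply: (@addrI _ (comp 0 f)); rewrite addr0 -h.
Qed.

Definition adj_data (C D : precat) (G : functor C D) (H : functor D C)
  (eta : forall c, Hom c (fob H (fob G c))) (eps : forall d, Hom (fob G (fob H d)) d) : Prop :=
  [/\ forall c c' (f : Hom c c'), comp (fmap H (fmap G f)) (eta c) = comp (eta c') f,
      forall d d' (g : Hom d d'), comp g (eps d) = comp (eps d') (fmap G (fmap H g)),
      forall c, comp (eps (fob G c)) (fmap G (eta c)) = idm (fob G c)
    & forall d, comp (fmap H (eps d)) (eta (fob H d)) = idm (fob H d)].

Definition sh (C D : precat) (G : functor C D) (H : functor D C)
  (eta : forall c, Hom c (fob H (fob G c))) c d (g : Hom (fob G c) d) : Hom c (fob H d) :=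
  comp (fmap H g) (eta c).
Definition fl (C D : precat) (G : functor C D) (H : functor D C)
  (eps : forall d, Hom (fob G (fob H d)) d) c d (f : Hom c (fob H d)) : Hom (fob G c) d :=
  comp (eps d) (fmap G f).

Arguments adj_data {C D} G H eta eps.

Lemma fl_sh (C D : precat) (G : functor C D) (H : functor D C) eta eps
  (ha : adj_data G H eta eps) c d (g : Hom (fob G c) d) : fl eps (sh eta g) = g.
Proof.
case: ha => n1 n2 t1 t2; rewrite /fl /sh fmap_comp comp_assoc -n2 -comp_assoc t1.
by rewrite comp_idr.
Qed.

Lemma sh_fl (C D : precat) (G : functor C D) (H : functor D C) eta eps
  (ha : adj_data G H eta eps) c d (f : Hom c (fob H d)) : sh eta (fl eps f) = f.
Proof.
case: ha => n1 n2 t1 t2; rewrite /fl /sh fmap_comp -comp_assoc n1 comp_assoc t2.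
by rewrite comp_idl.
Qed.

Lemma sh_post (C D : precat) (G : functor C D) (H : functor D C) eta
  c d d' (v : Hom d d') (g : Hom (fob G c) d) :
  sh eta (comp v g) = comp (fmap H v) (sh eta g).
Proof. by rewrite /sh fmap_comp comp_assoc. Qed.

Lemma fl_pre (C D : precat) (G : functor C D) (H : functor D C) eps
  c c' d (u : Hom c' c) (f : Hom c (fob H d)) :
  fl eps (comp f u) = comp (fl eps f) (fmap G u).
Proof. by rewrite /fl fmap_comp comp_assoc. Qed.

Lemma fl_post (C D : precat) (G : functor C D) (H : functor D C) eta eps
  (ha : adj_data G H eta eps) c d d' (v : Hom d d') (f : Hom c (fob H d)) :
  fl eps (comp (fmap H v) f) = comp v (fl eps f).
Proof.
case: ha => n1 n2 t1 t2; rewrite /fl fmap_comp comp_assoc -n2 comp_assoc //.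
Qed.

Lemma sh_pre (C D : precat) (G : functor C D) (H : functor D C) eta eps
  (ha : adj_data G H eta eps) c c' d (u : Hom c' c) (g : Hom (fob G c) d) :
  sh eta (comp g (fmap G u)) = comp (sh eta g) u.
Proof.
case: ha => n1 n2 t1 t2; rewrite /sh fmap_comp -comp_assoc n1 comp_assoc //.
Qed.
Definition has_zero (C : precat) := exists Z : Ob C, forall X, (forall f g : Hom Z X, f = g) /\ (forall f g : Hom X Z, f = g).

Lemma abelian_zero C : is_abelian C -> has_zero C.
Proof. by case. Qed.

Lemma radj_zero (C D : precat) (G : functor C D) (H : functor D C) eta eps
  (ha : adj_data G H eta eps) (hz : has_zero D) X Y : fmap H (0 : Hom X Y) = 0.
Proof.
case: hz => Z hZ.
have -> : (0 : Hom X Y) = comp (0 : Hom Z Y) (0 : Hom X Z) by rewrite comp0r.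
rewrite fmap_comp.
have -> : fmap H (0 : Hom X Z) = 0.
  rewrite -(sh_fl ha (fmap H (0 : Hom X Z))) -(sh_fl ha (0 : Hom (fob H X) (fob H Z))).
  by congr (sh eta _); apply: (proj2 (hZ _)).
by rewrite comp0r.
Qed.

Lemma ladj_zero (C D : precat) (G : functor C D) (H : functor D C) eta eps
  (ha : adj_data G H eta eps) (hz : has_zero C) X Y : fmap G (0 : Hom X Y) = 0.
Proof.
case: hz => Z hZ.
have -> : (0 : Hom X Y) = comp (0 : Hom Z Y) (0 : Hom X Z) by rewrite comp0r.
rewrite fmap_comp.
have -> : fmap G (0 : Hom Z Y) = 0.
  rewrite -(fl_sh ha (fmap G (0 : Hom Z Y))) -(fl_sh ha (0 : Hom (fob G Z) (fob G Y))).
  by congr (fl eps _); apply: (proj1 (hZ _)).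
by rewrite comp0l.
Qed.

Lemma radj_kernel (C D : precat) (G : functor C D) (H : functor D C) eta eps
  (ha : adj_data G H eta eps) (hz : has_zero D) X Y K (f : Hom X Y) (k : Hom K X) :
  is_kernel f k -> is_kernel (fmap H f) (fmap H k).
Proof.
have H0 := radj_zero ha hz.
have sh0 : forall c d, sh eta (0 : Hom (fob G c) d) = 0.
  by move=> c d; rewrite /sh H0 comp0l.
have fl0 : forall c d, fl eps (0 : Hom c (fob H d)) = 0.
  by move=> c d; rewrite -(sh0 c d) fl_sh.
case=> k0 ku; split; first by rewrite -fmap_comp k0 H0.
move=> W g hg.
have : comp f (fl eps g) = 0 by rewrite -(fl_post ha) hg fl0.
case/ku => u' [hu' uu].
exists (sh eta u'); split; first by rewrite -sh_post hu' sh_fl.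
move=> u hu.
have e : comp k (fl eps u) = fl eps g by rewrite -(fl_post ha) hu.
by rewrite (uu _ e) sh_fl.
Qed.

Lemma ladj_cokernel (C D : precat) (G : functor C D) (H : functor D C) eta eps
  (ha : adj_data G H eta eps) (hz : has_zero C) X Y Q (f : Hom X Y) (c : Hom Y Q) :
  is_cokernel f c -> is_cokernel (fmap G f) (fmap G c).
Proof.
have G0 := ladj_zero ha hz.
have fl0 : forall c d, fl eps (0 : Hom c (fob H d)) = 0.
  by move=> c0 d; rewrite /fl G0 comp0r.
have sh0 : forall c d, sh eta (0 : Hom (fob G c) d) = 0.
  by move=> c0 d; rewrite -(fl0 c0 d) sh_fl.
case=> c0 cu; split; first by rewrite -fmap_comp c0 G0.
move=> W g hg.
have : comp (sh eta g) f = 0 by rewrite -(sh_pre ha) hg sh0.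
case/cu => u' [hu' uu].
exists (fl eps u'); split; first by rewrite -fl_pre hu' fl_sh.
move=> u hu.
have e : comp (sh eta u) c = sh eta g by rewrite -(sh_pre ha) hu.
by rewrite (uu _ e) fl_sh.
Qed.
Lemma kernel_transfer (C : precat) (X Y K K' : Ob C) (f : Hom X Y) (k : Hom K X) (k' : Hom K' X) :
  is_kernel f k -> is_kernel f k' -> is_section k /\ fully_invariant k ->
  is_section k' /\ fully_invariant k'.
Proof.
move=> [k0 ku] [k0' ku'] [[s hs] hfi].
have [u [hu _]] := ku _ _ k0'.
have [v [hv _]] := ku' _ _ k0.
have vu : comp v u = idm K'.
  have [w [_ uw]] := ku' _ _ k0'.
  rewrite -(uw (comp v u)); last by rewrite comp_assoc hv hu.
  by rewrite (uw (idm K')) // comp_idr.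
split.
  by exists (comp v s); rewrite -comp_assoc -hu (comp_assoc s) hs comp_idl.
move=> h; have [a ha] := hfi h.
exists (comp v (comp a u)).
rewrite comp_assoc hv -hu comp_assoc ha -comp_assoc //.
Qed.
Lemma cokernel_transfer (C : precat) (X Y Q Q' : Ob C) (f : Hom X Y) (c : Hom Y Q) (c' : Hom Y Q') :
  is_cokernel f c -> is_cokernel f c' -> is_retraction c /\ fully_coinvariant c ->
  is_retraction c' /\ fully_coinvariant c'.
Proof.
move=> [c0 cu] [c0' cu'] [[r hr] hfi].
have [u [hu _]] := cu _ _ c0'.
have [v [hv _]] := cu' _ _ c0.
have uv : comp u v = idm Q'.
  have [w [_ uw]] := cu' _ _ c0'.
  rewrite -(uw (comp u v)); last by rewrite -comp_assoc hv hu.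
  by rewrite (uw (idm Q')) // comp_idl.
split.
  exists (comp r v); rewrite -hu -comp_assoc (comp_assoc c) hr comp_idl //.
move=> h; have [a ha] := hfi h.
exists (comp (comp u a) v).
rewrite -comp_assoc hv -hu -comp_assoc ha comp_assoc //.
Qed.

Lemma ff_kernel_transfer (C D : precat) (G : functor C D) (hff : fully_faithful G)
  (hker : forall X Y K (f : Hom X Y) (k : Hom K X), is_kernel f k -> is_kernel (fmap G f) (fmap G k))
  (hex : forall (X Y : Ob C) (f : Hom X Y), exists K (k : Hom K X), is_kernel f k) M N :
  strongly_rickart M N <-> strongly_rickart (fob G M) (fob G N).
Proof.
split.
- move=> hs f' K' k' hk'.
  have [ginv c1 c2] := hff M N.
  have [K [k hk]] := hex _ _ (ginv f').
  have hGk := hker _ _ _ _ _ hk; rewrite c2 in hGk.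
  apply: (kernel_transfer hGk hk').
  have [[s hsec] hfi] := hs _ _ _ hk.
  split; first by exists (fmap G s); rewrite -fmap_comp hsec fmap_id.
  move=> h; have [ginvM d1 d2] := hff M M.
  have [a ha] := hfi (ginvM h).
  by exists (fmap G a); rewrite -{1}(d2 h) -!fmap_comp ha.
- move=> hs f K k hk.
  have [[s' hsec] hfi] := hs _ _ _ (hker _ _ _ _ _ hk).
  have [ginv c1 c2] := hff M K.
  have [ginvK d1 d2] := hff K K.
  split.
    exists (ginv s'); apply: (bij_inj (hff K K)).
    by rewrite fmap_comp c2 hsec fmap_id.
  move=> h; have [a ha] := hfi (fmap G h).
  exists (ginvK a); apply: (bij_inj (hff K M)).
  by rewrite !fmap_comp d2.
Qed.

Lemma ff_cokernel_transfer (C D : precat) (G : functor C D) (hff : fully_faithful G)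
  (hcok : forall X Y Q (f : Hom X Y) (c : Hom Y Q), is_cokernel f c -> is_cokernel (fmap G f) (fmap G c))
  (hex : forall (X Y : Ob C) (f : Hom X Y), exists Q (c : Hom Y Q), is_cokernel f c) M N :
  dual_strongly_rickart M N <-> dual_strongly_rickart (fob G M) (fob G N).
Proof.
split.
- move=> hs f' Q' c' hc'.
  have [ginv c1 c2] := hff M N.
  have [Q [c hc]] := hex _ _ (ginv f').
  have hGc := hcok _ _ _ _ _ hc; rewrite c2 in hGc.
  apply: (cokernel_transfer hGc hc').
  have [[s hsec] hfi] := hs _ _ _ hc.
  split; first by exists (fmap G s); rewrite -fmap_comp hsec fmap_id.
  move=> h; have [ginvN d1 d2] := hff N N.
  have [a ha] := hfi (ginvN h).
  by exists (fmap G a); rewrite -{1}(d2 h) -!fmap_comp ha.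
- move=> hs f Q c hc.
  have [[s' hsec] hfi] := hs _ _ _ (hcok _ _ _ _ _ hc).
  have [ginv c1 c2] := hff Q N.
  have [ginvQ d1 d2] := hff Q Q.
  split.
    exists (ginv s'); apply: (bij_inj (hff Q Q)).
    by rewrite fmap_comp c2 hsec fmap_id.
  move=> h; have [a ha] := hfi (fmap G h).
  exists (ginvQ a); apply: (bij_inj (hff N Q)).
  by rewrite !fmap_comp d2.
Qed.
Definition isom (C : precat) (X Y : Ob C) (f : Hom X Y) :=
  exists g : Hom Y X, comp g f = idm X /\ comp f g = idm Y.

Lemma lff_unit_iso (C D : precat) (G : functor C D) (H : functor D C) eta eps
  (ha : adj_data G H eta eps) : fully_faithful G -> forall c, isom (eta c).
Proof.
move=> hff c; case: (ha) => n1 n2 t1 t2.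
have [gi c1 c2] := hff (fob H (fob G c)) c.
have et : fmap G (gi (eps (fob G c))) = eps (fob G c) := c2 _.
exists (gi (eps (fob G c))); split.
  by apply: (bij_inj (hff c c)); rewrite fmap_comp et t1 fmap_id.
by rewrite -n1 et t2.
Qed.

Lemma rff_counit_iso (C D : precat) (G : functor C D) (H : functor D C) eta eps
  (ha : adj_data G H eta eps) : fully_faithful H -> forall d, isom (eps d).
Proof.
move=> hff d; case: (ha) => n1 n2 t1 t2.
have [gi c1 c2] := hff d (fob G (fob H d)).
have es : fmap H (gi (eta (fob H d))) = eta (fob H d) := c2 _.
exists (gi (eta (fob H d))); split.
  by rewrite n2 es t1.
by apply: (bij_inj (hff d d)); rewrite fmap_comp es t2 fmap_id.
Qed.

Lemma unit_iso_lff (C D : precat) (G : functor C D) (H : functor D C) eta eps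
  (ha : adj_data G H eta eps) : (forall c, isom (eta c)) -> fully_faithful G.
Proof.
move=> hi X Y; case: (ha) => n1 n2 t1 t2.
have [t [ht1 ht2]] := hi Y.
exists (fun h => comp t (comp (fmap H h) (eta X))).
  by move=> f; rewrite n1 comp_assoc ht1 comp_idl.
have et : fmap G t = eps (fob G Y).
  by rewrite -[RHS]comp_idr -fmap_id -ht2 fmap_comp comp_assoc t1 comp_idl.
by move=> h; rewrite !fmap_comp et comp_assoc -n2 -comp_assoc t1 comp_idr.
Qed.

Lemma counit_iso_rff (C D : precat) (G : functor C D) (H : functor D C) eta eps
  (ha : adj_data G H eta eps) : (forall d, isom (eps d)) -> fully_faithful H.
Proof.
move=> hi X Y; case: (ha) => n1 n2 t1 t2.
have [s [hs1 hs2]] := hi X.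
exists (fun h => comp (eps Y) (comp (fmap G h) s)).
  by move=> g; rewrite comp_assoc -n2 -comp_assoc hs2 comp_idr.
have es : fmap H s = eta (fob H X).
  by rewrite -[RHS]comp_idl -fmap_id -hs1 fmap_comp -comp_assoc t2 comp_idr.
by move=> h; rewrite !fmap_comp es n1 comp_assoc t2 comp_idl.
Qed.

Lemma cross_rel (A B : precat) (L : functor B A) (F : functor A B) (R : functor B A)
  e1 p1 e2 p2 (ha1 : adj_data L F e1 p1) (ha2 : adj_data F R e2 p2) x y
  (g : Hom (fob F (fob L x)) y) :
  comp (p2 y) (sh e1 (sh e2 g)) = comp g (e1 x).
Proof.
rewrite [sh e1 _]/sh comp_assoc.
change (comp (fl p2 (sh e2 g)) (e1 x) = comp g (e1 x)).
by rewrite (fl_sh ha2).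
Qed.

Lemma cross1 (A B : precat) (L : functor B A) (F : functor A B) (R : functor B A)
  e1 p1 e2 p2 (ha1 : adj_data L F e1 p1) (ha2 : adj_data F R e2 p2) :
  (forall x, isom (e1 x)) -> forall y, isom (p2 y).
Proof.
move=> hi y.
have inj : forall x (a b : Hom x (fob F (fob R y))), comp (p2 y) a = comp (p2 y) b -> a = b.
  move=> x a b e.
  have [t' [t1' t2']] := hi x.
  have key : forall c : Hom x (fob F (fob R y)), c = sh e1 (sh e2 (fl p2 (fl p1 c))).
    by move=> c; rewrite (sh_fl ha2) (sh_fl ha1).
  have e' : fl p2 (fl p1 a) = fl p2 (fl p1 b).
    rewrite (key a) (key b) !(cross_rel ha1 ha2) in e.
    by rewrite -[LHS]comp_idr -[RHS]comp_idr -t2' !comp_assoc e.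
  by rewrite (key a) (key b) e'.
have [t [t1 t2]] := hi y.
have es : comp (p2 y) (sh e1 (sh e2 t)) = idm y by rewrite (cross_rel ha1 ha2) t1.
exists (sh e1 (sh e2 t)); split => //.
by apply: inj; rewrite comp_assoc es comp_idl comp_idr.
Qed.

Lemma cross2 (A B : precat) (L : functor B A) (F : functor A B) (R : functor B A)
  e1 p1 e2 p2 (ha1 : adj_data L F e1 p1) (ha2 : adj_data F R e2 p2) :
  (forall y, isom (p2 y)) -> forall x, isom (e1 x).
Proof.
move=> hi x.
have inj : forall y (g g' : Hom (fob F (fob L x)) y), comp g (e1 x) = comp g' (e1 x) -> g = g'.
  move=> y g g' e.
  have [s' [s1' s2']] := hi y.
  have ph : forall h : Hom (fob F (fob L x)) y, sh e1 (sh e2 h) = comp s' (comp h (e1 x)).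
    by move=> h; rewrite -(cross_rel ha1 ha2) comp_assoc s1' comp_idl.
  have e' : sh e1 (sh e2 g) = sh e1 (sh e2 g') by rewrite !ph e.
  by rewrite -(fl_sh ha2 g) -(fl_sh ha2 g') -(fl_sh ha1 (sh e2 g)) -(fl_sh ha1 (sh e2 g')) e'.
have [s [s1 s2]] := hi x.
set t := fl p2 (fl p1 s).
have ht : comp t (e1 x) = idm x.
  by rewrite -(cross_rel ha1 ha2) /t (sh_fl ha2) (sh_fl ha1) s2.
exists t; split => //.
by apply: inj; rewrite -comp_assoc ht comp_idl comp_idr.
Qed.

Theorem corollary4p3 (A B : precat) (hA : is_abelian A) (hB : is_abelian B)
    (L : functor B A) (F : functor A B) (R : functor B A)
    (hLF : adjoint L F) (hFR : adjoint F R) :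
  (forall M N : Ob A, fully_faithful F ->
     (strongly_rickart M N <-> strongly_rickart (fob F M) (fob F N)) /\
     (dual_strongly_rickart M N <-> dual_strongly_rickart (fob F M) (fob F N))) /\
  (forall M N : Ob B, fully_faithful L \/ fully_faithful R ->
     (strongly_rickart M N <-> strongly_rickart (fob R M) (fob R N)) /\
     (dual_strongly_rickart M N <-> dual_strongly_rickart (fob L M) (fob L N))).
Proof.
case: hLF => e1 [p1 ha1']; have ha1 : adj_data L F e1 p1 := ha1'.
case: hFR => e2 [p2 ha2']; have ha2 : adj_data F R e2 p2 := ha2'.
case: hA => [zA [_ [kerA [cokA _]]]].
case: hB => [zB [_ [kerB [cokB _]]]].
split.
- move=> M N hff; split.
    exact: (ff_kernel_transfer hff (radj_kernel ha1 zA) kerA).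
  exact: (ff_cokernel_transfer hff (ladj_cokernel ha2 zA) cokA).
- move=> M N hor.
  have [ffL ffR] : fully_faithful L /\ fully_faithful R.
    case: hor => hff; split => //.
      exact: (counit_iso_rff ha2 (cross1 ha1 ha2 (lff_unit_iso ha1 hff))).
    exact: (unit_iso_lff ha1 (cross2 ha1 ha2 (rff_counit_iso ha2 hff))).
  split.
    exact: (ff_kernel_transfer ffR (radj_kernel ha2 zB) kerB).
  exact: (ff_cokernel_transfer ffL (ladj_cokernel ha1 zB) cokB).
Qed.
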